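(* Let $\mathbb{P}=\langle \mathit{PF},\Pi\rangle$ be a well-defined ground ProbLog program and let $\mathbb{P}'$ be the $\mathrm{LP}^{\mathrm{MLN}}$ program containing, for each probabilistic fact $pr::a$ in $\mathit{PF}$: the rules $\ln(pr):\ a$ and $\ln(1-pr):\ \bot\leftarrow a$ if $0<pr<1$; the rule $\alpha:\ a$ if $pr=1$; the rule $\alpha:\ \bot\leftarrow a$ if $pr=0$; and containing $\alpha:R$ for each rule $R\in\Pi$. Then $\mathbb{P}$ and $\mathbb{P}'$ have the same probability distribution over all interpretations: $P_{\mathbb{P}}(I)=P_{\mathbb{P}'}(I)$ for every interpretation $I$.
   Context: Interpretations are sets of ground atoms of a signature $\sigma$ with finitely many ground atoms. Ground atoms are divided into probabilistic atoms and derived atoms. A ground ProbLog program $\mathbb{P}=\langle\mathit{PF},\Pi\rangle$ consists of a set $\mathit{PF}$ of probabilistic facts $pr::a$ ($a$ a probabilistic atom, $pr\in[0,1]$ its probability $pr(a)$), and a set $\Pi$ of ground normal rules $A\leftarrow B_1,\dots,B_m,\mathit{not}\ B_{m+1},\dots,\mathit{not}\ B_n$ with $A$ not a probabilistic atom. A total choice $\mathit{TC}$ is a subset of the probabilistic atoms, with probability $\Pr_{\mathbb{P}}(\mathit{TC})=\prod_{a\in\mathit{TC}}pr(a)\cdot\prod_{b\notin \mathit{TC}}(1-pr(b))$ ($b$ ranging over probabilistic atoms). $\mathbb{P}$ is well-defined if for each total choice $\mathit{TC}$, $\Pi\cup\mathit{TC}$ has a total (two-valued) well-founded model. For such $\mathbb{P}$,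 $P_{\mathbb{P}}(I)=\Pr_{\mathbb{P}}(\mathit{TC})$ if there is a total choice $\mathit{TC}$ such that $I$ is the total well-founded model of $\Pi\cup\mathit{TC}$, and $0$ otherwise. A formula is negative if every atom occurrence is in the scope of negation. A rule has the form $A\leftarrow B\wedge N$ ($A$ a possibly empty disjunction of atoms, $B$ a conjunction of atoms, $N$ a negative formula; $\mathit{not}$ is $\neg$). The reduct $\Pi^I$ of a ground program consists of $A\leftarrow B$ for rules with $I\models N$; $I$ is a stable model if it is a minimal model of $\Pi^I$. An $\mathrm{LP}^{\mathrm{MLN}}$ program is a finite set of weighted rules $w:R$ ($w$ real or the symbol $\alpha$); $\Pi_I=\{w:R\mid I\models R\}$; $\mathrm{SM}[\Pi]=\{I\mid I$ stable model of the unweighted $\Pi_I\}$; $W_\Pi(I)=\exp(\sum_{w:R\in\Pi_I}w)$ if $I\in\mathrm{SM}[\Pi]$, else $0$; $P_\Pi(I)=\lim_{\alpha\to\infty}W_\Pi(I)/\sum_{J\in\mathrm{SM}[\Pi]}W_\Pi(J)$. *)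

(* Defs.v *)
From HB Require Import structures.
From mathcomp Require Import all_boot all_order all_algebra.
From mathcomp Require Import all_classical all_reals all_analysis.
Set Implicit Arguments. Unset Strict Implicit. Unset Printing Implicit Defensive.
Import Order.TTheory GRing.Theory Num.Theory.
Local Open Scope ring_scope.

(* Ground atoms: a finite type [A]; interpretations: finite sets {set A}. *)

Section Generic.
Variable A : finType.

Definition lfp (F : {set A} -> {set A}) : {set A} :=
  [set a | [forall X : {set A}, (F X \subset X) ==> (a \in X)]].
End Generic.

Section ProbLog.
Variable A : finType.

(* A ground normal rule  h <- B_1,...,B_m, not B_{m+1},...,not B_n
   is represented as (h, {B_1..B_m}, {B_{m+1}..B_n}). *)
Definition nrule := (A * {set A} * {set A})%type.
Definition nhead (r : nrule) : A := r.1.1.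
Definition npos (r : nrule) : {set A} := r.1.2.
Definition nneg (r : nrule) : {set A} := r.2.

Variable Pi : {set nrule}.

(* Immediate consequence operator of the Gelfond-Lifschitz reduct of
   Pi u TC w.r.t. J, applied to X. *)
Definition gl_step (TC J X : {set A}) : {set A} :=
  TC :|: [set nhead r | r in Pi & (npos r \subset X) && [disjoint nneg r & J]].

Definition Gamma (TC J : {set A}) : {set A} := lfp (gl_step TC J).

(* Well-founded model (alternating fixpoint, Van Gelder):
   true atoms = lfp (Gamma o Gamma); the atoms not false = Gamma(true atoms). *)
Definition wf_true (TC : {set A}) : {set A} := lfp (fun X => Gamma TC (Gamma TC X)).
Definition wf_total (TC : {set A}) : bool := Gamma TC (wf_true TC) == wf_true TC.

Variable prob : {set A}.

Definition well_defined : Prop :=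
  forall TC : {set A}, TC \subset prob -> wf_total TC.

Variable R : realType.
Variable pr : A -> R.

Definition Pr_TC (TC : {set A}) : R :=
  (\prod_(a in TC) pr a) * \prod_(b in prob :\: TC) (1 - pr b).

Definition problog_prob (I : {set A}) : R :=
  match [pick TC : {set A} | (TC \subset prob) && wf_total TC && (wf_true TC == I)] with
  | Some TC => Pr_TC TC
  | None => 0
  end.
End ProbLog.

Section LPMLN.
Variable A : finType.

(* A rule  H <- B /\ N  with H a disjunction of atoms (set, possibly empty =
   bottom), B a conjunction of atoms, N = conjunction of negated atoms:
   (H, B, Nset). *)
Definition lrule := ({set A} * {set A} * {set A})%type.
Definition lhead (r : lrule) : {set A} := r.1.1.
Definition lpos (r : lrule) : {set A} := r.1.2.
Definition lneg (r : lrule) : {set A} := r.2.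

Definition sat_neg (I : {set A}) (r : lrule) : bool := [disjoint lneg r & I].
Definition sat_rule (I : {set A}) (r : lrule) : bool :=
  ((lpos r \subset I) && sat_neg I r) ==> ~~ [disjoint lhead r & I].
Definition sat_pos (I : {set A}) (r : lrule) : bool :=
  (lpos r \subset I) ==> ~~ [disjoint lhead r & I].

Definition model_reduct (Q : seq lrule) (I J : {set A}) : bool :=
  all (fun r => sat_neg I r ==> sat_pos J r) Q.

Definition stable (Q : seq lrule) (I : {set A}) : bool :=
  model_reduct Q I I &&
  [forall J : {set A}, (J \proper I) ==> ~~ model_reduct Q I J].

Variable R : realType.
Inductive weight := Soft of R | Hard.
Definition wval (alpha : R) (w : weight) : R :=
  match w with Soft x => x | Hard => alpha end.

Definition wprog := seq (weight * lrule).

Definition sat_part (P : wprog) (I : {set A}) : seq lrule :=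
  [seq wr.2 | wr <- P & sat_rule I wr.2].

Definition SM (P : wprog) (I : {set A}) : bool := stable (sat_part P I) I.

Definition Wt (P : wprog) (alpha : R) (I : {set A}) : R :=
  if SM P I then expR (\sum_(wr <- P | sat_rule I wr.2) wval alpha wr.1) else 0.

(* W_Pi(I) / sum_{J in SM[Pi]} W_Pi(J); P_Pi(I) is its limit as alpha -> oo *)
Definition lpmln_ratio (P : wprog) (alpha : R) (I : {set A}) : R :=
  Wt P alpha I / \sum_(J : {set A} | SM P J) Wt P alpha J.
End LPMLN.

Section Translation.
Variables (A : finType) (R : realType).
Variables (prob : {set A}) (pr : A -> R) (Pi : {set nrule A}).

Definition fact_rule (a : A) : lrule A := ([set a], finset.set0, finset.set0).
Definition constr_rule (a : A) : lrule A := (finset.set0, [set a], finset.set0).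

Definition pf_rules (a : A) : wprog A R :=
  if (0 < pr a) && (pr a < 1) then
    [:: (Soft (ln (pr a)), fact_rule a); (Soft (ln (1 - pr a)), constr_rule a)]
  else if pr a == 1 then [:: (Hard R, fact_rule a)]
  else if pr a == 0 then [:: (Hard R, constr_rule a)]
  else [::].

Definition rule_of_nrule (r : nrule A) : lrule A := ([set nhead r], npos r, nneg r).

Definition translate : wprog A R :=
  flatten [seq pf_rules a | a <- enum prob] ++
  [seq (Hard R, rule_of_nrule r) | r <- enum Pi].
End Translation.

(* Main.v *)
Require Import Defs.
From HB Require Import structures.
From mathcomp Require Import all_boot all_order all_algebra.
From mathcomp Require Import all_classical all_reals all_analysis.
From mathcomp Require Import ring.
Import Order.TTheory GRing.Theory Num.Theory.
Import numFieldNormedType.Exports.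
Local Open Scope ring_scope.
Set Implicit Arguments. Unset Strict Implicit. Unset Printing Implicit Defensive.

Lemma all_flatten_ (T : Type) (p : pred T) (ss : seq (seq T)) :
  all p (flatten ss) = all (all p) ss.
Proof. by elim: ss => //= s ss IH; rewrite all_cat IH. Qed.

Lemma all_filter_ (T : Type) (p a : pred T) (s : seq T) :
  all a (seq.filter p s) = all (fun x => p x ==> a x) s.
Proof. by elim: s => //= x s IH; case: (p x) => //=; rewrite IH. Qed.

Section Lfp.
Variable A : finType.
Implicit Types F : {set A} -> {set A}.
Definition mono F := forall X Y : {set A}, X \subset Y -> F X \subset F Y.

Lemma lfp_min F X : F X \subset X -> lfp F \subset X.
Proof.
move=> HX; apply/fintype.subsetP=> a; rewrite finset.inE => /forallP /(_ X) /implyP; exact.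
Qed.

Lemma lfp_pre F : mono F -> F (lfp F) \subset lfp F.
Proof.
move=> m; apply/fintype.subsetP=> a Ha; rewrite finset.inE; apply/forallP=> X; apply/implyP=> HX.
have /m /fintype.subsetP S := lfp_min HX.
exact: (fintype.subsetP HX) (S a Ha).
Qed.
End Lfp.

Section Logic.
Variables (A : finType) (Pi : {set nrule A}) (prob : {set A}).
Hypothesis Hhead : forall r, r \in Pi -> nhead r \notin prob.
Implicit Types TC J X : {set A}.

Lemma gl_stepP TC J X a :
  reflect (a \in TC \/ exists2 r, r \in Pi &
             [/\ npos r \subset X, [disjoint nneg r & J] & a = nhead r])
          (a \in gl_step Pi TC J X).
Proof.
rewrite /gl_step finset.in_setU; apply: (iffP orP) => [[|/imsetP[r]]|[|[r rP [h1 h2 ->]]]].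
- by left.
- by rewrite finset.inE => /andP[rP /andP[h1 h2]] ->; right; exists r.
- by left.
- by right; apply/imsetP; exists r => //; rewrite finset.inE rP h1 h2.
Qed.

Lemma gl_mono TC J : mono (gl_step Pi TC J).
Proof.
move=> X Y XY; apply/fintype.subsetP=> a /gl_stepP [H|[r rP [h1 h2 ->]]]; apply/gl_stepP.
  by left.
by right; exists r => //; split => //; apply: fintype.subset_trans XY.
Qed.

Lemma Gamma_pre TC J : gl_step Pi TC J (Gamma Pi TC J) \subset Gamma Pi TC J.
Proof. exact: lfp_pre (gl_mono TC J). Qed.

Lemma Gamma_min TC J X : gl_step Pi TC J X \subset X -> Gamma Pi TC J \subset X.
Proof. exact: lfp_min. Qed.

Lemma TC_Gamma TC J : TC \subset Gamma Pi TC J.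
Proof.
apply/fintype.subsetP=> a aT; apply: (fintype.subsetP (Gamma_pre TC J)); apply/gl_stepP; by left.
Qed.

Lemma Gamma_anti TC J J' : J \subset J' -> Gamma Pi TC J' \subset Gamma Pi TC J.
Proof.
move=> JJ; apply: Gamma_min; apply: fintype.subset_trans (Gamma_pre TC J).
apply/fintype.subsetP=> a /gl_stepP [H|[r rP [h1 h2 ->]]]; apply/gl_stepP; first by left.
right; exists r => //; split => //.
by apply: disjointWr h2.
Qed.

Lemma Gamma_noprob TC J : Gamma Pi TC J \subset TC :|: ~: prob.
Proof.
apply: Gamma_min; apply/fintype.subsetP=> a /gl_stepP [H|[r rP [h1 h2 ->]]].
  by rewrite finset.in_setU H.
by rewrite finset.in_setU finset.in_setC Hhead ?orbT.
Qed.

Lemma wf_stable TC J : wf_total Pi TC -> Gamma Pi TC J = J -> wf_true Pi TC = J.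
Proof.
move=> /eqP Ht HJ.
have WJ : wf_true Pi TC \subset J.
  by apply: lfp_min; rewrite !HJ.
apply/eqP; rewrite finset.eqEsubset WJ /=.
by rewrite -{1}Ht -{1}HJ; apply: Gamma_anti.
Qed.

Lemma wf_prob TC : TC \subset prob -> wf_total Pi TC -> wf_true Pi TC :&: prob = TC.
Proof.
move=> Tp /eqP Ht; apply/setP=> a; rewrite finset.in_setI.
apply/andP/idP => [[aW ap]|aT].
  move: (fintype.subsetP (Gamma_noprob TC (wf_true Pi TC)) a); rewrite Ht finset.in_setU finset.in_setC ap orbF.
  by apply.
split; last exact: (fintype.subsetP Tp).
by rewrite -Ht; apply: (fintype.subsetP (TC_Gamma _ _)).
Qed.
End Logic.

Section Trans.
Variables (A : finType) (R : realType) (prob : {set A}) (pr : A -> R) (Pi : {set nrule A}).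
Hypothesis Hpr : forall a, a \in prob -> 0 <= pr a <= 1.
Hypothesis Hhead : forall r, r \in Pi -> nhead r \notin prob.
Implicit Types TC J K X : {set A}.

Local Notation P' := (translate prob pr Pi).

Lemma all_translateP (p : pred (weight R * lrule A)) :
  reflect ((forall a, a \in prob -> all p (pf_rules pr a)) /\
           (forall r, r \in Pi -> p (Hard R, rule_of_nrule r)))
          (all p P').
Proof.
rewrite /translate all_cat all_flatten_ !all_map.
apply: (iffP andP) => [[/seq.allP H1 /seq.allP H2]|[H1 H2]]; split.
- by move=> a ap; apply: (H1 a); rewrite mem_enum.
- by move=> r rP; apply: (H2 r); rewrite mem_enum.
- by apply/seq.allP => a; rewrite mem_enum; apply: H1.
- by apply/seq.allP => r; rewrite mem_enum; apply: H2.
Qed.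

Lemma pf_cases a : a \in prob ->
  [\/ (0 < pr a < 1) /\ pf_rules pr a =
        [:: (Soft (ln (pr a)), fact_rule a); (Soft (ln (1 - pr a)), constr_rule a)],
      pr a = 1 /\ pf_rules pr a = [:: (Hard R, fact_rule a)] |
      pr a = 0 /\ pf_rules pr a = [:: (Hard R, constr_rule a)]].
Proof.
move=> /Hpr /andP[h0 h1]; rewrite /pf_rules.
case: ifP => [H|H]; first by constructor 1.
case: eqP => [E|NE]; first by constructor 2.
case: eqP => [E|NE2]; first by constructor 3.
exfalso; move: H; rewrite !lt_neqAle h0 h1 !andbT eq_sym.
by rewrite (introN eqP NE) (introN eqP NE2).
Qed.

Lemma disj0 J : [disjoint (finset.set0 : {set A}) & J].
Proof. by rewrite -finset.setI_eq0 finset.set0I eqxx. Qed.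

Lemma sat_fact J a : sat_rule J (fact_rule a) = (a \in J).
Proof.
by rewrite /sat_rule /sat_neg /fact_rule /lpos /lneg /lhead /= finset.sub0set disj0 disjoints1 negbK.
Qed.
Lemma pos_fact K a : sat_pos K (fact_rule a) = (a \in K).
Proof. by rewrite /sat_pos /fact_rule /lpos /lhead /= finset.sub0set disjoints1 negbK. Qed.
Lemma neg_fact J a : sat_neg J (fact_rule a).
Proof. exact: disj0. Qed.
Lemma sat_constr J a : sat_rule J (constr_rule a) = (a \notin J).
Proof.
rewrite /sat_rule /sat_neg /constr_rule /lpos /lneg /lhead /= finset.sub1set disj0.
by case: (a \in J).
Qed.
Lemma pos_constr K a : sat_pos K (constr_rule a) = (a \notin K).
Proof.
rewrite /sat_pos /constr_rule /lpos /lhead /= finset.sub1set disj0.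
by case: (a \in K).
Qed.
Lemma neg_constr J a : sat_neg J (constr_rule a).
Proof. exact: disj0. Qed.
Lemma sat_nr J r : sat_rule J (rule_of_nrule r) =
  (npos r \subset J) && [disjoint nneg r & J] ==> (nhead r \in J).
Proof. by rewrite /sat_rule /sat_neg /rule_of_nrule /lpos /lneg /lhead /= disjoints1 negbK. Qed.
Lemma pos_nr K r : sat_pos K (rule_of_nrule r) = (npos r \subset K) ==> (nhead r \in K).
Proof. by rewrite /sat_pos /rule_of_nrule /lpos /lhead /= disjoints1 negbK. Qed.
Lemma neg_nr J r : sat_neg J (rule_of_nrule r) = [disjoint nneg r & J].
Proof. by []. Qed.

Lemma mr_eq (P : wprog A R) J K : model_reduct (sat_part P J) J K =
  all (fun wr => sat_rule J wr.2 ==> (sat_neg J wr.2 ==> sat_pos K wr.2)) P.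
Proof. by rewrite /model_reduct /sat_part all_map all_filter_. Qed.

Lemma mr_self (P : wprog A R) J : model_reduct (sat_part P J) J J.
Proof.
rewrite mr_eq; elim: P => //= wr P IH; rewrite IH andbT /sat_rule /sat_pos.
by case: (lpos wr.2 \subset J); case: (sat_neg J wr.2); case: [disjoint lhead wr.2 & J].
Qed.

Definition hardn (w : weight R) : nat := if w is Hard then 1 else 0.
Definition softv (w : weight R) : R := if w is Soft x then x else 0.
Definition dJ J := (\sum_(wr <- P' | ~~ sat_rule J wr.2) hardn wr.1)%N.
Definition sJ J := \sum_(wr <- P' | sat_rule J wr.2) softv wr.1.
Definition full J := SM P' J && (dJ J == 0)%N.
Definition consb TC := [forall a in prob,
  ((pr a == 1) ==> (a \in TC)) && ((pr a == 0) ==> (a \notin TC))].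

Lemma consP TC : reflect (forall a, a \in prob ->
   (pr a = 1 -> a \in TC) /\ (pr a = 0 -> a \notin TC)) (consb TC).
Proof.
apply: (iffP forallP) => H a.
  move=> ap; have := H a; rewrite ap /= => /andP[/implyP h1 /implyP h0].
  by split => /eqP ?; auto.
apply/implyP => ap; have [h1 h0] := H a ap.
by apply/andP; split; apply/implyP => /eqP; auto.
Qed.

Lemma dJ0 J : (dJ J == 0)%N =
  all (fun wr => ~~ sat_rule J wr.2 ==> (hardn wr.1 == 0)%N) P'.
Proof. by rewrite /dJ sum_nat_seq_eq0. Qed.

Lemma full_Gamma J : full J -> Gamma Pi (J :&: prob) J = J /\ consb (J :&: prob).
Proof.
case/andP => SMJ; rewrite dJ0 => /all_translateP [Hpf HPi].
have satPi r : r \in Pi -> sat_rule J (rule_of_nrule r).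
  by move=> /HPi /=; case: sat_rule.
have Hc : consb (J :&: prob).
  apply/consP => a ap; have := Hpf a ap.
  case: (pf_cases ap) => [[h ->]|[h ->]|[h ->]] /=.
  - move=> _; split => E; move: h; rewrite E ?ltxx ?andbF //.
  - rewrite sat_fact andbT implybF negbK => aJ; split => [_|E].
      by rewrite finset.in_setI aJ ap.
    by move: h; rewrite E => /eqP; rewrite eq_sym oner_eq0.
  - rewrite sat_constr andbT implybF negbK => aJ; split => [E|_].
      by move: h; rewrite E => /eqP; rewrite oner_eq0.
    by rewrite finset.in_setI (negbTE aJ).
split => //.
set TC := J :&: prob.
have GJ : Gamma Pi TC J \subset J.
  apply: Gamma_min; apply/fintype.subsetP => a /gl_stepP [H | [r rP [h1 h2 ->]]].
    by move: H; rewrite finset.in_setI => /andP[].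
  by have := satPi r rP; rewrite sat_nr h1 h2.
apply/eqP; rewrite finset.eqEsubset GJ /=; apply: contraT => NJG.
have PG : Gamma Pi TC J \proper J by rewrite properE GJ NJG.
move: SMJ => /andP[_ /forallP /(_ (Gamma Pi TC J))]; rewrite PG /= => /negP H; exfalso; apply: H.
rewrite mr_eq; apply/all_translateP; split.
- move=> a ap.
  have aG : (a \in J) ==> (a \in Gamma Pi TC J).
    apply/implyP => aJ; apply: (fintype.subsetP (TC_Gamma _ _ _)).
    by rewrite finset.in_setI aJ ap.
  have aG2 : (a \notin J) ==> (a \notin Gamma Pi TC J).
    by apply/implyP; apply: contra; apply: (fintype.subsetP GJ).
  case: (pf_cases ap) => [[h ->]|[h ->]|[h ->]] /=;
   by rewrite ?sat_fact ?neg_fact ?pos_fact ?sat_constr ?neg_constr ?pos_constr ?implyTb ?aG ?aG2.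
- move=> r rP; rewrite /= sat_nr neg_nr pos_nr.
  apply/implyP => _; apply/implyP => h2; apply/implyP => h1.
  apply: (fintype.subsetP (Gamma_pre _ _ _)); apply/gl_stepP; right; exists r => //.
Qed.

Lemma Gamma_full J : Gamma Pi (J :&: prob) J = J -> consb (J :&: prob) -> full J.
Proof.
move=> HG /consP Hc.
have satPi r : r \in Pi -> sat_rule J (rule_of_nrule r).
  move=> rP; rewrite sat_nr; apply/implyP => /andP[h1 h2].
  rewrite -{1}HG; apply: (fintype.subsetP (Gamma_pre _ _ _)); apply/gl_stepP.
  by right; exists r => //; split => //; rewrite HG.
rewrite /full; apply/andP; split.
- rewrite /SM /stable mr_self /=; apply/forallP => K; apply/implyP => PK.
  apply/negP => MK.
  have JK : J \subset K.
    rewrite -HG; apply: Gamma_min.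
    apply/fintype.subsetP => a /gl_stepP [H|[r rP [h1 h2 ->]]].
    + move: H; rewrite finset.in_setI => /andP[aJ ap].
      move: MK; rewrite mr_eq => /all_translateP [Hpf _]; have := Hpf a ap.
      have [_ h0] := Hc a ap.
      case: (pf_cases ap) => [[h ->]|[h ->]|[h ->]] /=.
      * by rewrite sat_fact aJ neg_fact pos_fact /= => /andP[].
      * by rewrite sat_fact aJ neg_fact pos_fact /= => /andP[].
      * by move: (h0 h); rewrite finset.in_setI aJ ap.
    + move: MK; rewrite mr_eq => /all_translateP [_ HP]; have := HP r rP.
      by rewrite /= satPi // neg_nr h2 pos_nr h1.
  by move: PK; rewrite properE JK andbF.
- rewrite dJ0; apply/all_translateP; split.
  + move=> a ap; have [h1 h0] := Hc a ap.
    case: (pf_cases ap) => [[h ->]|[h ->]|[h ->]] /=.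
    * by rewrite !implybT.
    * rewrite sat_fact /=; have := h1 h; rewrite finset.in_setI => /andP[-> _] //.
    * rewrite sat_constr /=; have := h0 h; rewrite finset.in_setI ap andbT => -> //.
  + by move=> r rP /=; rewrite satPi.
Qed.
Hypothesis Hwd : well_defined Pi prob.

Definition Fp i := if i \in prob then pr i else 0.
Definition Gp i := if i \in prob then 1 - pr i else 1.
Definition PrP TC := \prod_i (if i \in TC then Fp i else Gp i).

Lemma PrP_Pr TC : TC \subset prob -> Pr_TC prob pr TC = PrP TC.
Proof.
move=> Tp; rewrite /Pr_TC /PrP big_mkcond [X in _ * X]big_mkcond -big_split /=.
apply: eq_bigr => i _; rewrite finset.in_setD /Fp /Gp.
case: (boolP (i \in TC)) => iT /=; first by rewrite (fintype.subsetP Tp _ iT) mulr1.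
by case: (i \in prob); rewrite mul1r.
Qed.

Lemma PrP_cons TC : ~~ consb TC -> PrP TC = 0.
Proof.
case/forallPn => a; rewrite negb_imply => /andP[ap]; rewrite negb_and => H.
rewrite /PrP (bigD1 a) //=; apply/eqP; rewrite mulf_eq0; apply/orP; left.
move: H; rewrite /Fp /Gp ap !negb_imply.
by case/orP => [/andP[/eqP -> /negbTE ->]|/and3P[/eqP -> -> _]] /=; rewrite ?subrr.
Qed.

Lemma PrP_nsub TC : ~~ (TC \subset prob) -> PrP TC = 0.
Proof.
case/fintype.subsetPn => a aT nap.
by rewrite /PrP (bigD1 a) //= aT /Fp (negbTE nap) mul0r.
Qed.

Lemma sum_PrP : \sum_TC PrP TC = 1.
Proof.
transitivity (\prod_(i : A) (Fp i + Gp i)).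
  by rewrite bigA_distr.
rewrite big1 // => i _; rewrite /Fp /Gp; case: (i \in prob); first by rewrite addrC subrK.
by rewrite add0r.
Qed.

Lemma full_exp J : full J -> expR (sJ J) = PrP (J :&: prob).
Proof.
move=> HJ; have [_ /consP Hc] := full_Gamma HJ.
rewrite /sJ expR_sum /translate big_cat big_flatten /= !big_map big_enum /=.
rewrite [X in _ * X]big1 ?mulr1; last by move=> r _; rewrite /= expR0.
rewrite /PrP [RHS](bigID (fun i => i \in prob)) /= [X in _ * X]big1 ?mulr1; last first.
  by move=> i /negbTE ni; rewrite finset.in_setI ni andbF /Gp ni.
apply: eq_bigr => a ap; have [h1 h0] := Hc a ap.
rewrite finset.in_setI ap andbT /Fp /Gp ap.
case: (pf_cases ap) => [[h ->]|[h ->]|[h ->]].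
- case/andP: h => hp0 hp1.
  rewrite !big_cons big_nil /= sat_fact sat_constr; case: (a \in J) => /=.
    by rewrite mulr1 lnK // posrE.
  by rewrite ?mul1r ?mulr1 lnK // posrE subr_gt0.
- have aJ : a \in J by have := h1 h; rewrite finset.in_setI => /andP[].
  by rewrite big_cons big_nil /= sat_fact aJ /= expR0 mulr1 h.
- have aJ : a \notin J by have := h0 h; rewrite finset.in_setI ap andbT.
  by rewrite big_cons big_nil /= sat_constr aJ (negbTE aJ) /= expR0 mulr1 h subr0.
Qed.

Definition g J := if full J then expR (sJ J) else 0.

Lemma g_eq J : g J = problog_prob Pi prob pr J.
Proof.
rewrite /g /problog_prob; case: pickP => [TC /andP[/andP[Tp Tt] /eqP TJ]|Hn].
- have TCe : J :&: prob = TC by rewrite -TJ wf_prob.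
  have HG : Gamma Pi (J :&: prob) J = J by rewrite TCe -TJ; apply/eqP.
  rewrite PrP_Pr //; case: (boolP (consb TC)) => Hc.
    have Hf : full J by apply: Gamma_full => //; rewrite TCe.
    by rewrite Hf full_exp // TCe.
  have Hf : ~~ full J.
    apply/negP => Hf; have [_] := full_Gamma Hf; rewrite TCe; exact/negP.
  by rewrite (negbTE Hf) PrP_cons.
- case: ifP => // Hf; exfalso; have [HG Hc] := full_Gamma Hf.
  have := Hn (J :&: prob).
  by rewrite finset.subsetIr Hwd ?finset.subsetIr //= (wf_stable (Hwd (finset.subsetIr _ _)) HG) eqxx.
Qed.

Lemma pp_sum J : problog_prob Pi prob pr J =
  \sum_(TC : {set A} | TC \subset prob) (if wf_true Pi TC == J then Pr_TC prob pr TC else 0).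
Proof.
rewrite /problog_prob; case: pickP => [TC0 /andP[/andP[T0p T0t] /eqP T0J]|Hn].
- rewrite (bigD1 TC0) //= T0J eqxx big1 ?addr0 // => TC /andP[Tp NT].
  case: eqP => // TJ; exfalso; move/eqP: NT; apply.
  by rewrite -(wf_prob Hhead T0p T0t) -(wf_prob Hhead Tp (Hwd Tp)) TJ T0J.
- rewrite big1 // => TC Tp; have := Hn TC; rewrite Tp Hwd //=.
  by move=> ->.
Qed.

Lemma sum_prob : \sum_(J : {set A}) problog_prob Pi prob pr J = 1.
Proof.
under eq_bigr => J _ do rewrite pp_sum.
rewrite exchange_big /=.
under eq_bigr => TC _ do rewrite -big_mkcond /= (big_pred1 (wf_true Pi TC)) //.
rewrite -sum_PrP [RHS](bigID (fun TC => TC \subset prob)) /= [X in _ + X]big1 ?addr0.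
  by apply: eq_bigr => TC Tp; rewrite PrP_Pr.
by move=> TC; apply: PrP_nsub.
Qed.
Local Open Scope classical_set_scope.
Local Open Scope ring_scope.

Definition Hn := (\sum_(wr <- P') hardn wr.1)%N.
Definition kJ J := (\sum_(wr <- P' | sat_rule J wr.2) hardn wr.1)%N.

Lemma kd J : (kJ J + dJ J)%N = Hn.
Proof. by rewrite /Hn [RHS](bigID (fun wr => sat_rule J wr.2)). Qed.

Lemma wsum J (x : R) : \sum_(wr <- P' | sat_rule J wr.2) wval x wr.1 = x * (kJ J)%:R + sJ J.
Proof.
rewrite /kJ /sJ natr_sum mulr_sumr -big_split /=.
by apply: eq_bigr => [[[y|] r]] _ /=; rewrite ?mulr0 ?add0r ?mulr1 ?addr0.
Qed.

Definition h (x : R) J := if SM P' J then expR (sJ J) * expR (- x) ^+ dJ J else 0.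

Lemma Wt_h x J : Wt P' x J = expR (x * Hn%:R) * h x J.
Proof.
rewrite /Wt /h; case: ifP => _; last by rewrite mulr0.
rewrite wsum -(kd J) natrD -expRM_natl -!expRD; congr expR.
rewrite mulrDr; ring.
Qed.

Lemma ratio_eq x I : lpmln_ratio P' x I = h x I / \sum_(J : {set A} | SM P' J) h x J.
Proof.
rewrite /lpmln_ratio Wt_h; under eq_bigr => J _ do rewrite Wt_h.
by rewrite -mulr_sumr invfM mulrACA divff ?mul1r // expR_eq0.
Qed.

Lemma cvg_pow (f : R -> R) (a : R) n :
  f x @[x --> +oo] --> a -> f x ^+ n @[x --> +oo] --> a ^+ n.
Proof.
move=> fa; elim: n => [|n IH].
  under eq_fun do rewrite expr0.
  by rewrite expr0; exact: cvg_cst.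
under eq_fun do rewrite exprS.
by rewrite exprS; apply: cvgM.
Qed.

Lemma cvg_h J : h x J @[x --> +oo] -->
   (if SM P' J then expR (sJ J) * (dJ J == 0)%:R else 0).
Proof.
rewrite /h; case: ifP => _; last exact: cvg_cst.
rewrite -expr0n; apply: cvgM; first exact: cvg_cst.
apply: cvg_pow; exact: cvgr_expR.
Qed.

Lemma cvg_bigsum (s : seq {set A}) (P : pred {set A}) (f : {set A} -> R -> R) l :
  (forall J, f J x @[x --> +oo] --> l J) ->
  \sum_(J <- s | P J) f J x @[x --> +oo] --> \sum_(J <- s | P J) l J.
Proof.
move=> H; elim: s => [|J s IH].
  under eq_fun do rewrite big_nil.
  by rewrite big_nil; exact: cvg_cst.
under eq_fun do rewrite big_cons.
by rewrite big_cons; case: (P J) => //; apply: cvgD.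
Qed.

Lemma main I : lpmln_ratio P' x I @[x --> +oo] --> problog_prob Pi prob pr I.
Proof.
under eq_fun do rewrite ratio_eq.
pose gl J := if SM P' J then expR (sJ J) * (dJ J == 0)%:R else 0.
have gl_g J : gl J = g J.
  by rewrite /gl /g /full; case: (SM P' J); case: (dJ J == 0) => /=; rewrite ?mulr1 ?mulr0.
have S1 : \sum_(J : {set A} | SM P' J) gl J = 1.
  rewrite -sum_prob big_mkcond; apply: eq_bigr => J _.
  by rewrite -g_eq -gl_g /gl; case: (SM P' J).
have -> : problog_prob Pi prob pr I = gl I * (\sum_(J : {set A} | SM P' J) gl J)^-1.
  by rewrite S1 invr1 mulr1 gl_g g_eq.
apply: cvgM; first exact: cvg_h.
apply: cvgV; first by rewrite S1 oner_neq0.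
by apply: cvg_bigsum => J; exact: cvg_h.
Qed.
End Trans.

Local Open Scope classical_set_scope.
Local Open Scope ring_scope.

Theorem theorem4 (R : realType) (A : finType) (prob : {set A}) (pr : A -> R)
    (Pi : {set nrule A})
    (Hpr : forall a, a \in prob -> 0 <= pr a <= 1)
    (Hhead : forall r, r \in Pi -> nhead r \notin prob)
    (Hwd : well_defined Pi prob)
    (I : {set A}) :
  lpmln_ratio (translate prob pr Pi) alpha I @[alpha --> +oo]
    --> problog_prob Pi prob pr I.
Proof. exact: (main Hpr Hhead Hwd). Qed.
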